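(* Let $d,m,n\ge1$, $\gamma\in[0,1)$, $\alpha,\beta>0$ and $D=3d+2m+2$. Let $\mathbf P,\mathbf V\in\mathbb R^{D\times D}$ be partitioned conformally with $D=(2d+m+1)+(d+m+1)$ as $\mathbf P=\begin{bmatrix}\mathbf P_{11}&\mathbf P_{12}\\ \mathbf P_{21}&\mathbf P_{22}\end{bmatrix}$, $\mathbf V=\begin{bmatrix}\mathbf V_{11}&\mathbf V_{12}\\ \mathbf V_{21}&\mathbf V_{22}\end{bmatrix}$, and suppose $$\mathbf P_{12}=\begin{bmatrix}\mathbf 0_{d\times1}&\mathbf 0_{d\times m}&-\mathbf I_d\\ \mathbf 0_{d\times1}&\mathbf 0_{d\times m}&\mathbf I_d\\ 1&\mathbf 0_{1\times m}&\mathbf 0_{1\times d}\\ \mathbf 0_{m\times1}&\mathbf 0_{m\times m}&\mathbf 0_{m\times d}\end{bmatrix},\qquad \mathbf P_{22}=\mathbf 0,$$ the last $d+m$ rows of $\mathbf V_{21}$ equal $\begin{bmatrix}\mathbf 0_{m\times d}&\mathbf 0_{m\times d}&\mathbf 0_{m\times1}&\alpha\mathbf I_m\\ \beta\mathbf I_d&\mathbf 0_{d\times d}&\mathbf 0_{d\times1}&\mathbf 0_{d\times m}\end{bmatrix}$, the last $d+m$ rows of $\mathbf V_{22}$ are zero, and $\mathbf P_{11},\mathbf P_{21},\mathbf V_{11},\mathbf V_{12}$ and the first rows of $\mathbf V_{21},\mathbf V_{22}$ are arbitrary. Then for every $c\ne0$ and every input, $\mathsf{TF}_{(c\mathbf P,c^{-1}\mathbf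 V)}(\mathbf H)=[\boldsymbol\lambda_{\mathrm{AC}};\mathbf w_{\mathrm{AC}}]$, i.e. the transformer exactly implements the batch actor-critic update.
   Context: A linear self-attention block with parameters $(\mathbf P,\mathbf V)$ maps $\mathbf H\in\mathbb R^{D\times(n+1)}$ to $\mathbf H_{\mathrm{out}}=\mathbf H+\frac1n(\mathbf V\mathbf H)(\mathbf H^\top\mathbf P\mathbf H)$; here the readout $\mathsf{TF}_{(\mathbf P,\mathbf V)}(\mathbf H)\in\mathbb R^{m+d}$ is the vector of the last $d+m$ entries of the last column of $\mathbf H_{\mathrm{out}}$. Actor-critic data: value feature map $\boldsymbol\phi_V:\mathcal S\to\mathbb R^d$, policy feature map $\boldsymbol\phi_\pi:\mathcal S\times\mathcal A\to\mathbb R^m$ (finite action set), actor parameter $\boldsymbol\lambda\in\mathbb R^m$, critic parameter $\mathbf w\in\mathbb R^d$, softmax policy $\pi_{\boldsymbol\lambda}(a\mid s)\propto\exp(\boldsymbol\lambda^\top\boldsymbol\phi_\pi(s,a))$, score $\mathbf g_{\boldsymbol\lambda}(s,a)=\boldsymbol\phi_\pi(s,a)-\sum_b\boldsymbol\phi_\pi(s,b)\pi_{\boldsymbol\lambda}(b\mid s)$, and a trajectory $(s_0,a_0,r_1,\dots,r_n,s_n,a_n)$. Let $\delta_i=r_{i+1}+\gamma\mathbf w^\top\boldsymbol\phi_V(s_{i+1})-\mathbf w^\top\boldsymbol\phi_V(s_i)$. The batch actor-critic update is $\mathbf w_{\mathrm{AC}}=\mathbf w+\frac{\beta}{n}\sum_{i=0}^{n-1}\delta_i\boldsymbol\phi_V(s_i)$,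 $\boldsymbol\lambda_{\mathrm{AC}}=\boldsymbol\lambda+\frac{\alpha}{n}\sum_{i=0}^{n-1}\gamma^i\delta_i\mathbf g_{\boldsymbol\lambda}(s_i,a_i)$. The prompt $\mathbf H\in\mathbb R^{D\times(n+1)}$ has, for $i=0,\dots,n-1$, column $i+1$ equal to $[\boldsymbol\phi_V(s_i);\gamma\boldsymbol\phi_V(s_{i+1});r_{i+1};\gamma^i\mathbf g_{\boldsymbol\lambda}(s_i,a_i);\mathbf 0_{d+m+1}]$, and last column $[\mathbf 0_{2d+m+1};1;\boldsymbol\lambda;\mathbf w]$. *)

(* Defs.v *)
From HB Require Import structures.
From mathcomp Require Import all_boot all_order all_algebra.
From mathcomp Require Import reals sequences exp.
Set Implicit Arguments. Unset Strict Implicit. Unset Printing Implicit Defensive.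
Import Order.TTheory GRing.Theory Num.Theory.
Local Open Scope ring_scope.

Section AC.
Variable R : realType.
Variables (d m : nat).

Definition ptop := (d + d + 1 + m)%N.
Definition qbot := (1 + m + d)%N.

Definition softmax (S : Type) (A : finType) (phiPi : S -> A -> 'cV[R]_m)
  (lam : 'cV[R]_m) (s : S) (b : A) : R :=
  expR (\sum_(k < m) lam k 0 * phiPi s b k 0) /
  \sum_(b' : A) expR (\sum_(k < m) lam k 0 * phiPi s b' k 0).

Definition score (S : Type) (A : finType) (phiPi : S -> A -> 'cV[R]_m)
  (lam : 'cV[R]_m) (s : S) (a : A) : 'cV[R]_m :=
  phiPi s a - \sum_(b : A) softmax phiPi lam s b *: phiPi s b.

Definition dotv k (u v : 'cV[R]_k) : R := \sum_(i < k) u i 0 * v i 0.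

Definition tderr (S : Type) (phiV : S -> 'cV[R]_d) (gamma : R) (w : 'cV[R]_d)
  (s : nat -> S) (r : nat -> R) (i : nat) : R :=
  r i.+1 + gamma * dotv w (phiV (s i.+1)) - dotv w (phiV (s i)).

Definition w_AC (S : Type) (phiV : S -> 'cV[R]_d) (gamma beta : R) (w : 'cV[R]_d)
  (n : nat) (s : nat -> S) (r : nat -> R) : 'cV[R]_d :=
  w + (beta / n%:R) *: \sum_(i < n) tderr phiV gamma w s r i *: phiV (s i).

Definition lam_AC (S : Type) (A : finType) (phiV : S -> 'cV[R]_d)
  (phiPi : S -> A -> 'cV[R]_m) (gamma alpha : R) (lam : 'cV[R]_m) (w : 'cV[R]_d)
  (n : nat) (s : nat -> S) (a : nat -> A) (r : nat -> R) : 'cV[R]_m :=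
  lam + (alpha / n%:R) *:
    \sum_(i < n) (gamma ^+ i * tderr phiV gamma w s r i) *: score phiPi lam (s i) (a i).

(* Column i+1 (1-indexed) of the prompt, for sample i = 0..n-1 (top part; bottom is 0) *)
Definition data_col (S : Type) (A : finType) (phiV : S -> 'cV[R]_d)
  (phiPi : S -> A -> 'cV[R]_m) (gamma : R) (lam : 'cV[R]_m)
  (s : nat -> S) (a : nat -> A) (r : nat -> R) (i : nat) : 'cV[R]_ptop :=
  col_mx (col_mx (col_mx (phiV (s i)) (gamma *: phiV (s i.+1))) (r i.+1)%:M)
         (gamma ^+ i *: score phiPi lam (s i) (a i)).

Definition prompt (S : Type) (A : finType) (phiV : S -> 'cV[R]_d)
  (phiPi : S -> A -> 'cV[R]_m) (gamma : R) (lam : 'cV[R]_m) (w : 'cV[R]_d)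
  (n : nat) (s : nat -> S) (a : nat -> A) (r : nat -> R) :
  'M[R]_(ptop + qbot, n + 1) :=
  row_mx
    (col_mx (\matrix_(k < ptop, j < n) data_col phiV phiPi gamma lam s a r j k 0)
            (0 : 'M_(qbot, n)))
    (col_mx (0 : 'cV_ptop) (col_mx (col_mx (1%:M : 'cV_1) lam) w)).

Definition lsa n (P V : 'M[R]_(ptop + qbot)) (H : 'M[R]_(ptop + qbot, n + 1)) :
  'M[R]_(ptop + qbot, n + 1) :=
  H + (n%:R)^-1 *: ((V *m H) *m (H^T *m P *m H)).

(* Readout: last m+d entries of the last column of H_out *)
Definition TF n (P V : 'M[R]_(ptop + qbot)) (H : 'M[R]_(ptop + qbot, n + 1)) :
  'cV[R]_(m + d) :=
  let c := rsubmx (dsubmx (lsa P V H)) : 'cV[R]_qbot in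
  col_mx (dsubmx (usubmx c : 'cV[R]_(1 + m))) (dsubmx c).

Definition P12 : 'M[R]_(ptop, qbot) :=
  col_mx (col_mx (col_mx
    (row_mx (row_mx (0 : 'M_(d, 1)) (0 : 'M_(d, m))) (- (1%:M : 'M_d)))
    (row_mx (row_mx (0 : 'M_(d, 1)) (0 : 'M_(d, m))) (1%:M : 'M_d)))
    (row_mx (row_mx (1 : 'M_(1, 1)) (0 : 'M_(1, m))) (0 : 'M_(1, d))))
    (0 : 'M_(m, qbot)).

Definition V21_lam (alpha : R) : 'M[R]_(m, ptop) :=
  row_mx (row_mx (row_mx (0 : 'M_(m, d)) (0 : 'M_(m, d))) (0 : 'M_(m, 1))) (alpha%:M : 'M_m).
Definition V21_w (beta : R) : 'M[R]_(d, ptop) :=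
  row_mx (row_mx (row_mx (beta%:M : 'M_d) (0 : 'M_d)) (0 : 'M_(d, 1))) (0 : 'M_(d, m)).

End AC.

(* Main.v *)
Require Import Defs.
From HB Require Import structures.
From mathcomp Require Import all_boot all_order all_algebra.
From mathcomp Require Import reals sequences exp.
From mathcomp Require Import ring.
Import Order.TTheory GRing.Theory Num.Theory.
Local Open Scope ring_scope.

Lemma rd_lin (R : realType) p q k l (X Y : 'M[R]_(p + q, k + l)) (e : R) :
  rsubmx (dsubmx (X + e *: Y)) = rsubmx (dsubmx X) + e *: rsubmx (dsubmx Y).
Proof. by apply/matrixP => i j; rewrite !mxE. Qed.

Theorem theorem3 (R : realType) (d m n : nat) (hd : (0 < d)%N) (hm : (0 < m)%N)
  (hn : (0 < n)%N) (gamma alpha beta : R) (hg0 : 0 <= gamma) (hg1 : gamma < 1)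
  (ha : 0 < alpha) (hb : 0 < beta)
  (P V : 'M[R]_(ptop d m + qbot d m))
  (hP12 : ursubmx P = P12 R d m)
  (hP22 : drsubmx P = 0)
  (hV21l : dsubmx (usubmx (dlsubmx V : 'M_(1 + m + d, _)) : 'M_(1 + m, _)) = V21_lam d m alpha)
  (hV21w : dsubmx (dlsubmx V : 'M_(1 + m + d, _)) = V21_w d m beta)
  (hV22l : dsubmx (usubmx (drsubmx V : 'M_(1 + m + d, _)) : 'M_(1 + m, _)) = 0)
  (hV22w : dsubmx (drsubmx V : 'M_(1 + m + d, _)) = 0) :
  forall (S : Type) (A : finType) (phiV : S -> 'cV[R]_d) (phiPi : S -> A -> 'cV[R]_m)
    (lam : 'cV[R]_m) (w : 'cV[R]_d) (s : nat -> S) (a : nat -> A) (r : nat -> R)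
    (c : R), c != 0 ->
  TF (c *: P) (c^-1 *: V) (prompt phiV phiPi gamma lam w n s a r)
  = col_mx (lam_AC phiV phiPi gamma alpha lam w n s a r) (w_AC phiV gamma beta w n s r).
Proof.
move=> S A phiV phiPi lam w s a r c hc.
rewrite /TF /lsa.
set H := prompt _ _ _ _ _ _ _ _ _.
have -> : (c^-1 *: V *m H) *m (H^T *m (c *: P) *m H) = (V *m H) *m (H^T *m P *m H).
  by rewrite -scalemxAl -scalemxAr -scalemxAl -scalemxAl -scalemxAr scalerA mulVf // scale1r.
rewrite rd_lin.
set X := \matrix_(k < ptop d m, j < n) data_col phiV phiPi gamma lam s a r j k 0.
set y := col_mx (col_mx (1%:M : 'cV_1) lam) w : 'cV[R]_(qbot d m).
have eH : H = block_mx X 0 0 y by rewrite /H /prompt block_mxEh.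
have hy : rsubmx (dsubmx H) = y by rewrite eH -/(drsubmx _) block_mxKdr.
rewrite -mul_dsub_mx -mulmx_rsub -mul_dsub_mx -mulmx_rsub hy.
have hrH : rsubmx H = col_mx 0 y by rewrite eH block_mxEh row_mxKr.
have hPy : P *m col_mx 0 y = col_mx (P12 R d m *m y) 0.
  by rewrite -[P]submxK mul_block_col !mulmx0 !add0r hP12 hP22 mul0mx.
rewrite -!mulmxA hrH hPy.
have hHt : H^T *m col_mx (P12 R d m *m y) 0 = col_mx (X^T *m (P12 R d m *m y)) 0.
  by rewrite eH tr_block_mx mul_block_col !mulmx0 !addr0 trmx0 mul0mx.
rewrite hHt.
have hHu : H *m col_mx (X^T *m (P12 R d m *m y)) 0 = col_mx (X *m (X^T *m (P12 R d m *m y))) 0.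
  by rewrite eH mul_block_col !mulmx0 !addr0 mul0mx.
rewrite hHu.
set u := X^T *m (P12 R d m *m y).
have hV : dsubmx V *m col_mx (X *m u) 0 = dlsubmx V *m (X *m u).
  by rewrite -[dsubmx V]hsubmxK mul_row_col mulmx0 addr0.
rewrite hV.
rewrite -[dlsubmx V : 'M_(1 + m + d, _)]vsubmxK -[usubmx (dlsubmx V : 'M_(1 + m + d, _)) : 'M_(1 + m, _)]vsubmxK hV21l hV21w.
rewrite !mul_col_mx !scale_col_mx /y !add_col_mx col_mxKu !col_mxKd.
have hv : P12 R d m *m y = col_mx (col_mx (col_mx (- w) w) (1%:M : 'M_1)) (0 : 'cV_m).
  rewrite /P12 /y !mul_col_mx !mul_row_col !mul0mx !add0r mulNmx !mul1mx !addr0.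
  by [].
have hu : forall j : 'I_n, u j 0 = tderr phiV gamma w s r j.
  move=> j.
  have -> : u j 0 = ((data_col phiV phiPi gamma lam s a r j)^T *m (P12 R d m *m y)) 0 0.
    by rewrite !mxE; apply: eq_bigr => k _; rewrite !mxE.
  rewrite hv /data_col !tr_col_mx !mul_row_col.
  rewrite mulmx0 addr0 mulmx1 tr_scalar_mx mulmxN !mxE /tderr /dotv eqxx mulr1n.
  have e1 : \sum_j0 (phiV (s j))^T 0 j0 * w j0 0 = \sum_(i < d) w i 0 * phiV (s j) i 0.
    by apply: eq_bigr => i _; rewrite !mxE mulrC.
  have e2 : \sum_j0 (gamma *: phiV (s j.+1))^T 0 j0 * w j0 0 = gamma * \sum_(i < d) w i 0 * phiV (s j.+1) i 0.
    by rewrite mulr_sumr; apply: eq_bigr => i _; rewrite !mxE; ring.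
  rewrite e1 e2; ring.
have hXu : X *m u = \sum_(j < n) tderr phiV gamma w s r j *: data_col phiV phiPi gamma lam s a r j.
  apply/matrixP => k l; rewrite (ord1 l) [LHS]mxE summxE; apply: eq_bigr => i _.
  by rewrite [X k i]mxE [in RHS]mxE hu mulrC.
have hVL : forall j : nat, V21_lam d m alpha *m data_col phiV phiPi gamma lam s a r j
    = alpha *: (gamma ^+ j *: score phiPi lam (s j) (a j)).
  by move=> j; rewrite /V21_lam /data_col !mul_row_col !mul0mx !add0r mul_scalar_mx.
have hVW : forall j : nat, V21_w d m beta *m data_col phiV phiPi gamma lam s a r j
    = beta *: phiV (s j).
  by move=> j; rewrite /V21_w /data_col !mul_row_col !mul0mx !addr0 mul_scalar_mx.
rewrite hXu !mulmx_sumr /lam_AC /w_AC.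
congr col_mx; congr (_ + _); rewrite !scaler_sumr; apply: eq_bigr => j _;
  rewrite -scalemxAr ?hVL ?hVW !scalerA; congr (_ *: _); ring.
Qed.
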